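(* Let $f:\mathbb{R}^M\times\Theta\to\mathbb{R}^N$ (with $N\ge 1$) be a network whose first layer is linear, i.e. $f(\mathbf{x};\boldsymbol{\theta})=g(\mathbf{W}\mathbf{x};\bar{\boldsymbol{\theta}})$ with parameters $\boldsymbol{\theta}=(\mathbf{W},\bar{\boldsymbol{\theta}})$, $\mathbf{W}\in\mathbb{R}^{d\times M}$, and $g$ differentiable in its first argument and twice differentiable in the parameters. Let $(\mathbf{x}_i,\mathbf{y}_i)_{i=1}^n$ be training data with $\mathbf{x}_i\neq 0$, and let $\boldsymbol{\theta}^*$ be an exact interpolation solution, i.e. $f(\mathbf{x}_i;\boldsymbol{\theta}^* )=\mathbf{y}_i$ for all $i$, with first-layer weight $\mathbf{W}$. Then $$dV_{f(\boldsymbol{\theta}^* )}\le \frac{N^{-N/2}}{n}\sum_{i=1}^n\|J_f(\mathbf{x}_i)\|_F^N\le \frac{1}{n}\sqrt{\sum_{i=1}^n\frac{\|\mathbf{W}\|_2^{2N}}{\|\mathbf{x}_i\|_2^{2N}}}\left(\frac{n\,S(\boldsymbol{\theta}^* )}{N}\right)^{N/2}.$$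
   Context: The loss is the quadratic loss $L(\boldsymbol{\theta})=\frac1n\sum_{i=1}^n\frac12\|f(\mathbf{x}_i;\boldsymbol{\theta})-\mathbf{y}_i\|_2^2$, and the sharpness is $S(\boldsymbol{\theta})=\operatorname{Tr}(\nabla^2_{\boldsymbol{\theta}}L(\boldsymbol{\theta}))$. $J_f(\mathbf{x})\in\mathbb{R}^{N\times M}$ denotes the Jacobian of $\mathbf{x}\mapsto f(\mathbf{x};\boldsymbol{\theta}^* )$ at $\mathbf{x}$. The local volumetric ratio at $\mathbf{x}$ is $d\mathrm{vol}|_{f(\mathbf{x},\boldsymbol{\theta}^* )}=\sqrt{\det(J_f(\mathbf{x})J_f(\mathbf{x})^{T})}$ (the product of the singular values of $J_f(\mathbf{x})$), and the Local Volumetric Ratio (LVR) of the network is $dV_{f(\boldsymbol{\theta}^* )}=\frac1n\sum_{i=1}^n d\mathrm{vol}|_{f(\mathbf{x}_i,\boldsymbol{\theta}^* )}$. $\|\cdot\|_2$ is the Euclidean norm for vectors and spectral norm for matrices; $\|\cdot\|_F$ is the Frobenius norm. *)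

(* Defs.v *)
From HB Require Import structures.
From mathcomp Require Import all_boot all_order all_algebra.
From mathcomp Require Import all_classical all_reals all_analysis.
Set Implicit Arguments. Unset Strict Implicit. Unset Printing Implicit Defensive.
Import Order.TTheory GRing.Theory Num.Theory.
Import numFieldNormedType.Exports.
Local Open Scope classical_set_scope.
Local Open Scope ring_scope.

Section Defs.
Variable R : realType.

Definition p1_frob (m k : nat) (A : 'M[R]_(m, k)) : R :=
  Num.sqrt (\sum_(i < m) \sum_(j < k) A i j ^+ 2).

Definition p1_vnorm (k : nat) (v : 'cV[R]_k) : R := p1_frob v.

Definition p1_spec_norm (m k : nat) (A : 'M[R]_(m, k)) : R :=
  sup [set p1_vnorm (A *m v) | v in [set v : 'cV[R]_k | p1_vnorm v = 1]].

Definition p1_jacobian (M N : nat) (h : 'cV[R]_M -> 'cV[R]_N) (x : 'cV[R]_M)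
  : 'M[R]_(N, M) :=
  \matrix_(i < N, j < M) (derive h x (delta_mx j 0 : 'cV[R]_M)) i 0.

Definition p1_netf (M N d P : nat) (g : 'cV[R]_d -> 'cV[R]_P -> 'cV[R]_N)
  (x : 'cV[R]_M) (p : 'M[R]_(d, M) * 'cV[R]_P) : 'cV[R]_N :=
  g (p.1 *m x) p.2.

Definition p1_dvol (N M : nat) (J : 'M[R]_(N, M)) : R :=
  Num.sqrt (\det (J *m J^T)).

Definition p1_LVR (M N d P n : nat) (g : 'cV[R]_d -> 'cV[R]_P -> 'cV[R]_N)
  (W : 'M[R]_(d, M)) (thb : 'cV[R]_P) (xs : 'I_n -> 'cV[R]_M) : R :=
  n%:R^-1 * \sum_(i < n) p1_dvol (p1_jacobian (fun x => p1_netf g x (W, thb)) (xs i)).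

Definition p1_loss (M N d P n : nat) (g : 'cV[R]_d -> 'cV[R]_P -> 'cV[R]_N)
  (xs : 'I_n -> 'cV[R]_M) (ys : 'I_n -> 'cV[R]_N)
  (p : 'M[R]_(d, M) * 'cV[R]_P) : R :=
  n%:R^-1 * \sum_(i < n) 2^-1 * p1_vnorm (p1_netf g (xs i) p - ys i) ^+ 2.

Definition p1_d2 (V : normedModType R) (L : V -> R) (p e : V) : R :=
  derive (fun q => derive L q e) p e.

(* p1_sharpness: trace of the Hessian of the p1_loss in the standard coordinates
   of theta = (W, thb) *)
Definition p1_sharpness (M N d P n : nat) (g : 'cV[R]_d -> 'cV[R]_P -> 'cV[R]_N)
  (xs : 'I_n -> 'cV[R]_M) (ys : 'I_n -> 'cV[R]_N)
  (p : 'M[R]_(d, M) * 'cV[R]_P) : R :=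
  \sum_(i < d) \sum_(j < M) p1_d2 (p1_loss g xs ys) p (delta_mx i j, 0)
  + \sum_(k < P) p1_d2 (p1_loss g xs ys) p (0, delta_mx k 0).

End Defs.

(* Main.v *)
Require Import Defs.
From HB Require Import structures.
From mathcomp Require Import all_boot all_order all_algebra.
From mathcomp Require Import all_classical all_reals all_analysis.
From mathcomp Require Import ring lra.
Import Order.TTheory GRing.Theory Num.Theory.
Import numFieldNormedType.Exports.
Local Open Scope ring_scope.
Set Implicit Arguments. Unset Strict Implicit.
Set Implicit Arguments. Unset Strict Implicit.
Section LA.
Variable R : rcfType.

Lemma gramE N M (J : 'M[R]_(N, M)) i j :
  (J *m J^T) i j = \sum_k J i k * J j k.
Proof. by rewrite mxE; apply: eq_bigr => k _; rewrite mxE. Qed.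

Lemma proj_le (I : finType) (x y : I -> R) :
  \sum_k y k * y k != 0 ->
  \sum_k (x k - (\sum_l x l * y l) / (\sum_l y l * y l) * y k) ^+ 2
  <= \sum_k x k ^+ 2.
Proof.
set A := \sum_l y l * y l; set C := \sum_l x l * y l => A0.
have Age0 : 0 <= A by apply: sumr_ge0 => l _; by rewrite -expr2 sqr_ge0.
have -> : \sum_k (x k - C / A * y k) ^+ 2 =
   \sum_k x k ^+ 2 - 2 * (C / A) * C + (C / A) ^+ 2 * A.
  rewrite /A /C mulr_sumr mulr_sumr -sumrN -!big_split /=.
  apply: eq_bigr => k _; rewrite sqrrB; ring.
have -> : \sum_k x k ^+ 2 - 2 * (C / A) * C + (C / A) ^+ 2 * A
   = \sum_k x k ^+ 2 - C ^+ 2 / A by field.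
by rewrite gerBl divr_ge0 ?sqr_ge0.
Qed.

Lemma gram_diag_ge0 N M (K : 'M[R]_(N,M)) i : 0 <= (K *m K^T) i i.
Proof. by rewrite gramE sumr_ge0 // => k _; rewrite -expr2 sqr_ge0. Qed.

Lemma hadamard N M (J : 'M[R]_(N, M)) :
  \det (J *m J^T) <= \prod_i (J *m J^T) i i.
Proof.
elim: N J => [|N IH] J; first by rewrite det_mx00 big_ord0.
set a := (J *m J^T) ord0 ord0.
have [a0|a0] := eqVneq a 0.
  have J0 : forall k, J ord0 k = 0.
    move=> k.
    have H := @psumr_eq0P _ _ predT (fun k => J ord0 k * J ord0 k).
    have /eqP : J ord0 k * J ord0 k = 0.
      apply: H => //; first by move=> l _; rewrite -expr2 sqr_ge0.
      by rewrite -gramE.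
    by rewrite mulf_eq0 orbb => /eqP.
  have -> : \det (J *m J^T) = 0.
    rewrite (expand_det_row _ ord0) big1 // => j _.
    by rewrite gramE big1 ?mul0r // => k _; rewrite J0 mul0r.
  by apply: prodr_ge0 => i _; exact: gram_diag_ge0.
set b := fun i => (J *m J^T) i ord0.
pose T : 'M[R]_N.+1 :=
  \matrix_(i, j) (if (j == ord0) && (i != ord0) then b i / a else 0).
pose K := (1 - T) *m J.
have detT : \det (1 - T) = 1.
  rewrite det_trig; last first.
    apply/is_trig_mxP => i j lt_ij; rewrite !mxE.
    have j0 : (j == ord0) = false.
      apply/negbTE; rewrite -val_eqE /= -lt0n.
      exact: leq_ltn_trans (leq0n i) lt_ij.
    by rewrite j0 /= (_ : (i == j) = false) ?subr0 //; apply/negbTE; rewrite -val_eqE /= ltn_eqF.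
  by apply: big1 => i _; rewrite !mxE eqxx andbN subr0.
have detK : \det (K *m K^T) = \det (J *m J^T).
  rewrite /K trmx_mul !mulmxA -(mulmxA (1 - T)) det_mulmx det_mulmx det_tr detT.
  by rewrite mul1r mulr1.
have KE : forall i k, K i k = J i k - (i != ord0)%:R * (b i / a) * J ord0 k.
  move=> i k; rewrite /K mulmxBl mul1mx !mxE (bigD1 ord0) //= big1.
    by rewrite !mxE eqxx /= addr0; case: (i != ord0); rewrite /= ?mul1r ?mul0r.
  by move=> j /negbTE jn0; rewrite !mxE jn0 mul0r.
have row0E : forall j, (K *m K^T) ord0 j = (j == ord0)%:R * a.
  move=> j; rewrite gramE.
  have K0 : forall k, K ord0 k = J ord0 k.
    by move=> k; rewrite KE eqxx /= !mul0r subr0.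
  under eq_bigr do rewrite K0 KE.
  rewrite /a gramE; have [->|jn0] := eqVneq j ord0.
    by rewrite mul1r; apply: eq_bigr => k _; rewrite /= !mul0r subr0.
  rewrite mul0r.
  under eq_bigr do rewrite /= mul1r mulrBr.
  rewrite sumrB; apply/eqP; rewrite subr_eq0; apply/eqP.
  under [X in _ = X]eq_bigr do rewrite mulrCA.
  rewrite -mulr_sumr -(gramE J ord0 ord0) -/a divfK // /b gramE.
  by apply: eq_bigr => k _; rewrite mulrC.
pose K' := row' ord0 K.
have detKK : \det (K *m K^T) = a * \det (K' *m K'^T).
  rewrite (expand_det_row _ ord0) (bigD1 ord0) //= big1 => [|j jn0]; last first.
    by rewrite row0E (negbTE jn0) !mul0r.
  rewrite row0E eqxx mul1r addr0 /cofactor expr0 mul1r; congr (_ * \det _).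
  by apply/matrixP => i j; rewrite !mxE; apply: eq_bigr => k _; rewrite !mxE.
have diagle : forall i, (K' *m K'^T) i i <= (J *m J^T) (lift ord0 i) (lift ord0 i).
  move=> i; rewrite !gramE.
  have K'E : forall i k, K' i k = K (lift ord0 i) k by move=> *; rewrite /K' mxE.
  have l0 : forall i : 'I_N, (lift ord0 i != ord0) by move=> i'; rewrite eq_sym neq_lift.
  under eq_bigr do rewrite !K'E KE l0 /= mul1r -expr2.
  under [X in _ <= X]eq_bigr do rewrite -expr2.
  have := @proj_le _ (fun k => J (lift ord0 i) k) (fun k => J ord0 k).
  rewrite /b /a !gramE. move=> H; apply: H. by rewrite -gramE. 
have age0 : 0 <= a by exact: gram_diag_ge0.
rewrite -detK detKK big_ord_recl; apply: ler_wpM2l => //.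
apply: le_trans (IH K') _; apply: ler_prod => i _.
by rewrite gram_diag_ge0 diagle.
Qed.

Lemma dvol_le N M (J : 'M[R]_(N, M)) : (0 < N)%N ->
  Num.sqrt (\det (J *m J^T)) <=
  (Num.sqrt (N%:R : R)) ^- N * Num.sqrt (\sum_i \sum_k J i k ^+ 2) ^+ N.
Proof.
move=> N0.
have H2 : \prod_i (J *m J^T) i i <= ((\sum_i (J *m J^T) i i) / N%:R) ^+ N.
  have := (@leif_AGM R _ predT (fun i => (J *m J^T) i i) _).1.
  rewrite card_ord; apply => i _; exact: gram_diag_ge0.
have tr : \sum_i (J *m J^T) i i = \sum_i \sum_k J i k ^+ 2.
  by apply: eq_bigr => i _; rewrite gramE; apply: eq_bigr => k _; rewrite expr2.
rewrite tr in H2.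
set fr2 := \sum_i \sum_k J i k ^+ 2 in H2 *.
have fr0 : 0 <= fr2 by apply: sumr_ge0 => i _; apply: sumr_ge0 => k _; rewrite sqr_ge0.
have N0' : 0 < (N%:R : R) by rewrite ltr0n.
have -> : (Num.sqrt (N%:R : R)) ^- N * Num.sqrt fr2 ^+ N
   = Num.sqrt (((fr2 / N%:R) ^+ N)).
  rewrite -{2}(sqr_sqrtr fr0) -{2}(sqr_sqrtr (ltW N0')) -expr_div_n -exprAC.
  rewrite sqrtr_sqr ger0_norm; last by rewrite exprn_ge0 // divr_ge0 // sqrtr_ge0.
  by rewrite expr_div_n mulrC.
rewrite ler_sqrt; last by rewrite exprn_ge0 // divr_ge0 // ltW.
exact: le_trans (hadamard J) H2.
Qed.
End LA.
Section LB.
Variable R : realType.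

Lemma sum_expand (I : finType) (x y : I -> R) (a c : R) :
  \sum_i (x i * a - c * y i) ^+ 2 =
  a ^+ 2 * \sum_i x i ^+ 2 - 2 * a * c * \sum_i x i * y i + c ^+ 2 * \sum_i y i ^+ 2.
Proof.
rewrite !mulr_sumr -sumrN -!big_split /=; apply: eq_bigr => i _; ring.
Qed.

Lemma CS (I : finType) (u v : I -> R) :
  (\sum_i u i * v i) ^+ 2 <= (\sum_i u i ^+ 2) * (\sum_i v i ^+ 2).
Proof.
have Ag : 0 <= \sum_i u i ^+ 2 by apply: sumr_ge0 => i _; rewrite sqr_ge0.
have [A0|A0] := eqVneq (\sum_i u i ^+ 2) 0.
  have u0 : forall i, u i = 0.
    move=> i; apply/eqP; rewrite -sqrf_eq0; apply/eqP.
    by apply: (@psumr_eq0P _ _ predT (fun i => u i ^+ 2)) => // j _; rewrite sqr_ge0.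
  have -> : \sum_i u i * v i = 0 by apply: big1 => i _; rewrite u0 mul0r.
  by rewrite A0 mul0r expr2 mulr0.
have Ap : 0 < \sum_i u i ^+ 2 by rewrite lt_def A0.
have := @sum_expand _ v u (\sum_i u i ^+ 2) (\sum_i u i * v i).
have -> : \sum_i v i * u i = \sum_i u i * v i by apply: eq_bigr => i _; rewrite mulrC.
set A := \sum_i u i ^+ 2; set B := \sum_i v i ^+ 2; set C := \sum_i u i * v i.
move=> E.
have : 0 <= A * (A * B - C ^+ 2).
  have -> : A * (A * B - C ^+ 2) = A ^+ 2 * B - 2 * A * C * C + C ^+ 2 * A by ring.
  by rewrite -E sumr_ge0 // => i _; rewrite sqr_ge0.
by rewrite pmulr_rge0 // subr_ge0.
Qed.

Lemma vnormE k (v : 'cV[R]_k) : p1_vnorm v = Num.sqrt (\sum_i v i 0 ^+ 2).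
Proof. by rewrite /p1_vnorm /p1_frob; congr Num.sqrt; apply: eq_bigr => i _; rewrite big_ord1. Qed.

Lemma vnorm_ge0 k (v : 'cV[R]_k) : 0 <= p1_vnorm v.
Proof. by rewrite vnormE sqrtr_ge0. Qed.

Lemma nsq_ge0 k (v : 'cV[R]_k) : 0 <= \sum_i v i 0 ^+ 2.
Proof. by apply: sumr_ge0 => i _; rewrite sqr_ge0. Qed.

Lemma frob_sq m k (A : 'M[R]_(m, k)) : p1_frob A ^+ 2 = \sum_i \sum_j A i j ^+ 2.
Proof. by rewrite sqr_sqrtr // sumr_ge0 // => i _; rewrite sumr_ge0 // => j _; rewrite sqr_ge0. Qed.

Lemma vnorm_sq k (v : 'cV[R]_k) : p1_vnorm v ^+ 2 = \sum_i v i 0 ^+ 2.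
Proof. by rewrite vnormE sqr_sqrtr // nsq_ge0. Qed.

Lemma mulmx_bound d M (W : 'M[R]_(d, M)) (u : 'cV[R]_M) :
  p1_vnorm (W *m u) <= p1_frob W * p1_vnorm u.
Proof.
rewrite -(ler_pXn2r (n := 2)) ?nnegrE ?vnorm_ge0 ?mulr_ge0 ?sqrtr_ge0 ?vnorm_ge0 //.
rewrite exprMn !vnorm_sq frob_sq mulr_suml; apply: ler_sum => i _.
rewrite mxE; exact: (@CS _ (fun j => W i j) (fun j => u j 0)).
Qed.

Lemma vnormZ k (a : R) (v : 'cV[R]_k) : p1_vnorm (a *: v) = `|a| * p1_vnorm v.
Proof.
rewrite !vnormE -sqrtr_sqr -sqrtrM ?sqr_ge0 //; congr Num.sqrt.
by rewrite mulr_sumr; apply: eq_bigr => i _; rewrite mxE exprMn.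
Qed.

Local Open Scope classical_set_scope.

Lemma spec_in d M (W : 'M[R]_(d, M)) v : p1_vnorm v = 1 ->
  p1_vnorm (W *m v) <= p1_spec_norm W.
Proof.
move=> v1; apply: sup_upper_bound; last by exists v.
split; first by exists (p1_vnorm (W *m v)); exists v.
exists (p1_frob W) => _ [u u1 <-].
by apply: le_trans (mulmx_bound W u) _; rewrite u1 mulr1.
Qed.

Lemma spec_ge0 d M (W : 'M[R]_(d, M)) : 0 <= p1_spec_norm W.
Proof.
have [[v v1]|nv] := pselect (exists v : 'cV[R]_M, p1_vnorm v = 1).
  exact: le_trans (vnorm_ge0 _) (spec_in W v1).
rewrite /p1_spec_norm (_ : [set _ | _ in _] = set0) ?sup0 //.
by apply/seteqP; split => x //= [v v1 _]; apply: nv; exists v.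
Qed.

Lemma spec_bound d M (W : 'M[R]_(d, M)) v :
  p1_vnorm (W *m v) <= p1_spec_norm W * p1_vnorm v.
Proof.
have [n0|n0] := eqVneq (p1_vnorm v) 0.
  by apply: le_trans (mulmx_bound W v) _; rewrite n0 !mulr0.
have cp : 0 < p1_vnorm v by rewrite lt_def n0 vnorm_ge0.
have := spec_in W (v := (p1_vnorm v)^-1 *: v).
rewrite vnormZ ger0_norm ?invr_ge0 ?vnorm_ge0 // mulVf // => /(_ erefl).
by rewrite -scalemxAr vnormZ ger0_norm ?invr_ge0 ?vnorm_ge0 // mulrC ler_pdivrMr.
Qed.

Lemma spec_boundT d M (W : 'M[R]_(d, M)) u :
  p1_vnorm (W^T *m u) <= p1_spec_norm W * p1_vnorm u.
Proof.
set w := W^T *m u.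
have wE : forall k, w k 0 = \sum_i W i k * u i 0.
  by move=> k; rewrite /w mxE; apply: eq_bigr => i _; rewrite mxE.
have e1 : p1_vnorm w ^+ 2 = \sum_i u i 0 * (W *m w) i 0.
  rewrite vnorm_sq.
  transitivity (\sum_k \sum_i w k 0 * (W i k * u i 0)).
    by apply: eq_bigr => k _; rewrite expr2 {2}wE mulr_sumr.
  rewrite exchange_big; apply: eq_bigr => i _; rewrite mxE mulr_sumr.
  by apply: eq_bigr => k _; ring.
have e2 : p1_vnorm w ^+ 2 ^+ 2 <= p1_vnorm u ^+ 2 * (p1_spec_norm W * p1_vnorm w) ^+ 2.
  rewrite e1; apply: le_trans (CS (fun i => u i 0) (fun i => (W *m w) i 0)) _.
  rewrite -!vnorm_sq ler_wpM2l ?sqr_ge0 // ler_pXn2r ?nnegrE ?vnorm_ge0 ?mulr_ge0 ?spec_ge0 ?vnorm_ge0 //.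
  exact: spec_bound.
have [n0|n0] := eqVneq (p1_vnorm w) 0.
  by rewrite n0 mulr_ge0 ?spec_ge0 ?vnorm_ge0.
have wp : 0 < p1_vnorm w by rewrite lt_def n0 vnorm_ge0.
rewrite -(ler_pXn2r (n := 2)) ?nnegrE ?vnorm_ge0 ?mulr_ge0 ?spec_ge0 ?vnorm_ge0 //.
have E3 : p1_vnorm u ^+ 2 * (p1_spec_norm W * p1_vnorm w) ^+ 2
  = (p1_spec_norm W * p1_vnorm u) ^+ 2 * p1_vnorm w ^+ 2 by ring.
move: e2; rewrite E3; rewrite [X in X <= _ -> _]expr2.
by rewrite ler_pM2r ?exprn_gt0.
Qed.

Lemma frob_mul N d M (A : 'M[R]_(N, d)) (B : 'M[R]_(d, M)) :
  p1_frob (A *m B) <= p1_spec_norm B * p1_frob A.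
Proof.
rewrite -(ler_pXn2r (n := 2)) ?nnegrE ?sqrtr_ge0 ?mulr_ge0 ?spec_ge0 ?sqrtr_ge0 //.
rewrite exprMn !frob_sq mulr_sumr; apply: ler_sum => r _.
pose a : 'cV[R]_d := \col_k A r k.
have H : p1_vnorm (B^T *m a) ^+ 2 <= (p1_spec_norm B * p1_vnorm a) ^+ 2.
  rewrite ler_pXn2r ?nnegrE ?vnorm_ge0 ?mulr_ge0 ?spec_ge0 ?vnorm_ge0 //.
  exact: spec_boundT.
rewrite exprMn !vnorm_sq in H; apply: le_trans (le_trans _ H) _.
  by rewrite le_eqVlt; apply/orP; left; apply/eqP; apply: eq_bigr => j _; rewrite !mxE; congr (_ ^+ 2); apply: eq_bigr => k _; rewrite !mxE mulrC.
by rewrite le_eqVlt; apply/orP; left; apply/eqP; congr (_ * _); apply: eq_bigr => k _; rewrite mxE.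
Qed.
End LB.
Section AN.
Variable R : realType.

Lemma entry_is_derive (V : normedModType R) a b (F : V -> 'M[R]_(a, b)) q e r c :
  derivable F q e -> is_derive q e (fun q => F q r c) ('D_e F q r c).
Proof.
move=> dF; apply: DeriveDef; first exact: ((derivable_mxP F q e).1 dF r c).
by rewrite derive_mx // mxE.
Qed.

Lemma is_derive_form (V : normedModType R) n N (F G : 'I_n -> V -> 'cV[R]_N)
  (c : R) q e :
  (forall i, derivable (F i) q e) -> (forall i, derivable (G i) q e) ->
  is_derive q e (fun q => c * \sum_i \sum_r F i q r 0 * G i q r 0)
   (c * \sum_i \sum_r (F i q r 0 * 'D_e (G i) q r 0 + G i q r 0 * 'D_e (F i) q r 0)).
Proof.
move=> dF dG.
have -> : (fun q => c * \sum_i \sum_r F i q r 0 * G i q r 0) =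
  c \*: \sum_i \sum_r ((fun q => F i q r 0) * (fun q => G i q r 0)).
  apply/funext => q' /=; rewrite fct_sumE; congr (_ * _).
  by apply: eq_bigr => i _; rewrite fct_sumE.
apply: is_deriveZ; apply: is_derive_sum => i; apply: is_derive_sum => r.
apply: is_deriveM; exact: entry_is_derive.
Qed.
End AN.
Section FA.
Variable R : realType.

Lemma sum_pow_le (I : finType) (a : I -> R) k : (forall i, 0 <= a i) ->
  \sum_i a i ^+ k.+1 <= (\sum_i a i) ^+ k.+1.
Proof.
move=> a0; have S0 : 0 <= \sum_i a i by apply: sumr_ge0.
rewrite exprS mulr_suml; apply: ler_sum => i _; rewrite exprS ler_wpM2l //.
have ai : a i <= \sum_j a j.
  by rewrite (bigD1 i) //= lerDl sumr_ge0.
by rewrite lerXn2r // nnegrE.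
Qed.

Lemma CS_sqrt (I : finType) (u v : I -> R) :
  \sum_i u i * v i <= Num.sqrt (\sum_i u i ^+ 2) * Num.sqrt (\sum_i v i ^+ 2).
Proof.
rewrite -sqrtrM; last by apply: sumr_ge0 => i _; rewrite sqr_ge0.
apply: le_trans (ler_norm _) _.
by rewrite -sqrtr_sqr ler_sqrt ?CS // mulr_ge0 // sumr_ge0 // => i _; rewrite sqr_ge0.
Qed.

Lemma sqrtX (x : R) k : 0 <= x -> Num.sqrt (x ^+ k) = Num.sqrt x ^+ k.
Proof.
by move=> x0; rewrite -{1}(sqr_sqrtr x0) -exprM mulnC exprM sqrtr_sqr ger0_norm //.
Qed.

Lemma final_alg n N (F a vn : 'I_n -> R) (sp S : R) :
  (0 < n)%N -> (0 < N)%N -> (forall i, 0 < vn i) -> 0 <= sp ->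
  (forall i, 0 <= a i) -> (forall i, 0 <= F i) ->
  (forall i, F i <= sp / vn i * Num.sqrt (a i)) ->
  n%:R^-1 * \sum_i a i <= S ->
  (Num.sqrt (N%:R : R)) ^- N / n%:R * \sum_i F i ^+ N
  <= n%:R^-1 * Num.sqrt (\sum_i sp ^+ (2 * N) / vn i ^+ (2 * N)) *
     Num.sqrt (n%:R * S / N%:R) ^+ N.
Proof.
move=> n0 N0 vn0 sp0 a0 F0 Fle aS.
have np : 0 < (n%:R : R) by rewrite ltr0n.
have Np : 0 < (N%:R : R) by rewrite ltr0n.
have s0 : forall i, 0 <= sp / vn i by move=> i; rewrite divr_ge0 // ltW.
have aS' : \sum_i a i <= n%:R * S.
  by rewrite -(ler_pM2l (x := n%:R^-1)) ?invr_gt0 // mulrA mulVf ?mul1r // gt_eqF.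
have nS0 : 0 <= n%:R * S by apply: le_trans aS'; rewrite sumr_ge0.
have st1 : \sum_i F i ^+ N <= \sum_i (sp / vn i) ^+ N * Num.sqrt (a i) ^+ N.
  apply: ler_sum => i _; rewrite -exprMn; apply: lerXn2r; [by rewrite nnegrE | by rewrite nnegrE mulr_ge0 ?sqrtr_ge0 | exact: Fle].
apply: le_trans (ler_wpM2l _ (le_trans st1 (CS_sqrt _ _))) _.
  by rewrite mulr_ge0 ?invr_ge0 ?ler0n // invr_ge0 exprn_ge0 ?sqrtr_ge0.
have e1 : \sum_i ((sp / vn i) ^+ N) ^+ 2 = \sum_i sp ^+ (2 * N) / vn i ^+ (2 * N).
  by apply: eq_bigr => i _; rewrite -exprM mulnC expr_div_n.
have e2 : \sum_i (Num.sqrt (a i) ^+ N) ^+ 2 = \sum_i a i ^+ N.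
  by apply: eq_bigr => i _; rewrite -exprM mulnC exprM sqr_sqrtr.
rewrite e1 e2.
have st3 : Num.sqrt (\sum_i a i ^+ N) <= Num.sqrt (n%:R * S) ^+ N.
  rewrite -sqrtX // ler_sqrt ?exprn_ge0 //.
  case: N N0 {Np e1 e2 st1} => // N' _.
  apply: le_trans (sum_pow_le N' a0) _.
  by rewrite lerXn2r ?nnegrE ?sumr_ge0.
set A := Num.sqrt (\sum_i sp ^+ (2 * N) / vn i ^+ (2 * N)).
have A0 : 0 <= A by exact: sqrtr_ge0.
apply: le_trans (ler_wpM2l _ (ler_wpM2l A0 st3)) _.
  by rewrite mulr_ge0 ?invr_ge0 ?ler0n // invr_ge0 exprn_ge0 ?sqrtr_ge0.
rewrite (@sqrtrM _ (n%:R * S) (N%:R^-1)) // sqrtrV; last exact: ltW.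
rewrite exprMn exprVn le_eqVlt; apply/orP; left; apply/eqP; ring.
Qed.
End FA.
Section Main.
Variables (R : realType) (M N d P n : nat).
Variables (g : 'cV[R]_d -> 'cV[R]_P -> 'cV[R]_N)
  (xs : 'I_n -> 'cV[R]_M) (ys : 'I_n -> 'cV[R]_N).
Hypothesis H1 : forall (x : 'cV[R]_M) (p : 'M[R]_(d, M) * 'cV[R]_P),
      differentiable (p1_netf g x) p.
Hypothesis H2 : forall (x : 'cV[R]_M) (v p : 'M[R]_(d, M) * 'cV[R]_P),
      differentiable (fun q => derive (p1_netf g x) q v) p.

Let V := ('M[R]_(d, M) * 'cV[R]_P)%type.
Let f i := p1_netf g (xs i).
Let u i := fun q : V => f i q - ys i.

Lemma two_half (y x : R) : y / 2 * (x + x) = y * x.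
Proof. by field. Qed.

Lemma loss_form : p1_loss g xs ys =
  fun q => n%:R^-1 / 2 * \sum_i \sum_r u i q r 0 * u i q r 0.
Proof.
apply/funext => q; rewrite /p1_loss -mulrA; congr (_ * _).
rewrite mulr_sumr; apply: eq_bigr => i _; rewrite vnorm_sq mulr_sumr.
by apply: eq_bigr => r _; rewrite expr2.
Qed.

Lemma u_der i q e : derivable (u i) q e /\ 'D_e (u i) q = 'D_e (f i) q.
Proof.
have -> : u i = f i - cst (ys i) by apply/funext.
have Hf : derivable (f i) q e by apply: diff_derivable; exact: H1.
have H := is_deriveB (derivableP Hf) (is_derive_cst (ys i) q e).
by split; [exact: ex_derive | rewrite derive_val subr0].
Qed.

Lemma dloss e : (fun q => 'D_e (p1_loss g xs ys) q) =
  fun q => n%:R^-1 * \sum_i \sum_r u i q r 0 * 'D_e (f i) q r 0.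
Proof.
apply/funext => q; rewrite loss_form.
rewrite (@derive_val _ _ _ _ _ _ _ (@is_derive_form _ _ _ _ u u (n%:R^-1 / 2) q e (fun i => (u_der i q e).1) (fun i => (u_der i q e).1))).
rewrite !mulr_sumr; apply: eq_bigr => i _; rewrite !mulr_sumr.
by apply: eq_bigr => r _; rewrite (u_der i q e).2 two_half.
Qed.

Lemma d2loss p e : (forall i, f i p = ys i) ->
  p1_d2 (p1_loss g xs ys) p e = n%:R^-1 * \sum_i \sum_r ('D_e (f i) p r 0) ^+ 2.
Proof.
move=> interp; rewrite /p1_d2 dloss.
have dG : forall i, derivable (fun q => 'D_e (f i) q) p e.
  by move=> i; apply: diff_derivable; exact: H2.
rewrite (@derive_val _ _ _ _ _ _ _ (@is_derive_form _ _ _ _ u (fun i q => 'D_e (f i) q) n%:R^-1 p e (fun i => (u_der i p e).1) dG)).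
congr (_ * _); apply: eq_bigr => i _; apply: eq_bigr => r _.
by rewrite /u interp subrr mxE mul0r add0r (u_der i p e).2 expr2.
Qed.

Variables (W : 'M[R]_(d, M)) (thb : 'cV[R]_P).
Let G := fun z => g z thb.

Lemma netf_dir x E : 'D_((E, 0) : V) (p1_netf g x) (W, thb) = 'D_(E *m x) G (W *m x).
Proof.
rewrite /derive; f_equal; f_equal; apply/funext => h /=.
rewrite /p1_netf /G; congr (_ *: (_ - _)); congr g.
  by rewrite /= mulmxDl scalemxAl.
by rewrite /= scaler0 add0r.
Qed.


Hypothesis H0 : forall (th : 'cV[R]_P) (z : 'cV[R]_d), differentiable (fun z' => g z' th) z.

Lemma jac_dir x v : 'D_v (fun x => p1_netf g x (W, thb)) x = 'D_(W *m v) G (W *m x).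
Proof.
rewrite /derive; f_equal; f_equal; apply/funext => h /=.
by rewrite /p1_netf /G /= mulmxDr scalemxAr.
Qed.

Lemma DG_entry z (w : 'cV[R]_d) r :
  'D_w G z r 0 = \sum_a w a 0 * 'D_(delta_mx a 0 : 'cV[R]_d) G z r 0.
Proof.
have dG := H0 thb z.
rewrite deriveE //; under eq_bigr do rewrite deriveE //.
rewrite {1}(matrix_sum_delta w) linear_sum summxE; apply: eq_bigr => a _.
by rewrite big_ord1 linearZ /= mxE.
Qed.

Definition Jg (x : 'cV[R]_M) : 'M[R]_(N, d) :=
  \matrix_(r, a) 'D_(delta_mx a 0 : 'cV[R]_d) G (W *m x) r 0.

Lemma colv m k (A : 'M[R]_(m, k)) j a : (A *m (delta_mx j 0 : 'cV[R]_k)) a 0 = A a j.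
Proof. by rewrite -colE mxE. Qed.

Lemma jacE x : p1_jacobian (fun x => p1_netf g x (W, thb)) x = Jg x *m W.
Proof.
apply/matrixP => r j; rewrite !mxE jac_dir DG_entry; apply: eq_bigr => a _.
by rewrite colv !mxE mulrC.
Qed.

Lemma deltav m k (x : 'cV[R]_k) (a a' : 'I_m) b :
  (delta_mx a b *m x) a' 0 = (a' == a)%:R * x b 0.
Proof.
rewrite mxE (bigD1 b) //= big1 => [|k' /negbTE kb]; last by rewrite mxE kb andbF mul0r.
by rewrite mxE eqxx andbT addr0.
Qed.

Lemma netf_E x a b r :
  'D_((delta_mx a b, 0) : V) (p1_netf g x) (W, thb) r 0 = x b 0 * Jg x r a.
Proof.
rewrite netf_dir DG_entry (bigD1 a) //= big1 => [|a' /negbTE aa]; last first.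
  by rewrite deltav aa !mul0r.
by rewrite deltav eqxx mul1r addr0 mxE.
Qed.

Lemma sharp_ge : (forall i, f i (W, thb) = ys i) ->
  n%:R^-1 * \sum_i p1_vnorm (xs i) ^+ 2 * p1_frob (Jg (xs i)) ^+ 2
  <= p1_sharpness g xs ys (W, thb).
Proof.
move=> interp; rewrite /p1_sharpness.
have B_ge : 0 <= \sum_(k < P) p1_d2 (p1_loss g xs ys) (W, thb) (0, delta_mx k 0).
  apply: sumr_ge0 => k _; rewrite d2loss // mulr_ge0 ?invr_ge0 ?ler0n //.
  by apply: sumr_ge0 => i _; apply: sumr_ge0 => r _; rewrite sqr_ge0.
rewrite -[X in X <= _]addr0; apply: lerD => //.
have eqle : forall x y : R, x = y -> x <= y by move=> ? ? ->.
apply: eqle; symmetry.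
transitivity (\sum_(a < d) \sum_(b < M) n%:R^-1 *
   \sum_i \sum_r (xs i b 0 * Jg (xs i) r a) ^+ 2).
  apply: eq_bigr => a _; apply: eq_bigr => b _; rewrite d2loss //.
  by congr (_ * _); apply: eq_bigr => i _; apply: eq_bigr => r _; rewrite /f netf_E.
transitivity (n%:R^-1 * \sum_(a < d) \sum_(b < M)
   \sum_i \sum_r (xs i b 0 * Jg (xs i) r a) ^+ 2).
  by rewrite mulr_sumr; apply: eq_bigr => a _; rewrite mulr_sumr.
congr (_ * _).
under eq_bigr do rewrite exchange_big.
rewrite exchange_big; apply: eq_bigr => i _.
rewrite vnorm_sq frob_sq [X in _ = _ * X]exchange_big mulr_sumr; apply: eq_bigr => a _.
rewrite mulr_suml; apply: eq_bigr => b _; rewrite mulr_sumr; apply: eq_bigr => r _.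
by rewrite exprMn.
Qed.
End Main.
Lemma vnorm_gt0 (R : realType) k (v : 'cV[R]_k) : v != 0 -> 0 < p1_vnorm v.
Proof.
move=> v0; rewrite vnormE sqrtr_gt0 lt_def nsq_ge0 andbT.
apply: contra v0 => /eqP S0; apply/eqP/matrixP => i j; rewrite ord1 mxE.
apply/eqP; rewrite -sqrf_eq0; apply/eqP.
by apply: (@psumr_eq0P _ _ predT (fun i => v i 0 ^+ 2)) => // l _; rewrite sqr_ge0.
Qed.

Unset Implicit Arguments.

Theorem proposition1 (R : realType) (M N d P n : nat)
  (g : 'cV[R]_d -> 'cV[R]_P -> 'cV[R]_N)
  (xs : 'I_n -> 'cV[R]_M) (ys : 'I_n -> 'cV[R]_N)
  (W : 'M[R]_(d, M)) (thb : 'cV[R]_P) :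
  (0 < N)%N ->
  (* g differentiable in its first argument *)
  (forall (th : 'cV[R]_P) (z : 'cV[R]_d), differentiable (fun z' => g z' th) z) ->
  (* f twice differentiable in the parameters theta = (W, thb) *)
  (forall (x : 'cV[R]_M) (p : 'M[R]_(d, M) * 'cV[R]_P),
      differentiable (p1_netf g x) p) ->
  (forall (x : 'cV[R]_M) (v p : 'M[R]_(d, M) * 'cV[R]_P),
      differentiable (fun q => derive (p1_netf g x) q v) p) ->
  (forall i, xs i != 0) ->
  (* exact interpolation at theta* = (W, thb) *)
  (forall i, p1_netf g (xs i) (W, thb) = ys i) ->
  p1_LVR g W thb xs
    <= (Num.sqrt (N%:R : R)) ^- N / n%:R *
       \sum_(i < n) p1_frob (p1_jacobian (fun x : 'cV[R]_M => p1_netf g x (W, thb)) (xs i)) ^+ N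
  /\
  (Num.sqrt (N%:R : R)) ^- N / n%:R *
       \sum_(i < n) p1_frob (p1_jacobian (fun x : 'cV[R]_M => p1_netf g x (W, thb)) (xs i)) ^+ N
    <= n%:R^-1 *
       Num.sqrt (\sum_(i < n) p1_spec_norm W ^+ (2 * N) / p1_vnorm (xs i) ^+ (2 * N)) *
       Num.sqrt (n%:R * p1_sharpness g xs ys (W, thb) / N%:R) ^+ N.
Proof.
move=> N0 H0 H1 H2 xs0 interp; split.
  rewrite /p1_LVR [X in _ <= X * _]mulrC -mulrA; apply: ler_wpM2l.
    by rewrite invr_ge0 ler0n.
  rewrite mulr_sumr; apply: ler_sum => i _; exact: dvol_le.
have [n0|npos] := posnP n.
  have e0 : forall F : 'I_n -> R, \sum_i F i = 0.
    by move=> F; apply: big1 => i; have := ltn_ord i; move: (nat_of_ord i) => k; rewrite n0.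
  have -> : (n%:R^-1 : R) = 0 by rewrite n0 invr0.
  by rewrite e0 mulr0 !mul0r.
apply: (@final_alg R n N
  (fun i => p1_frob (p1_jacobian (fun x : 'cV[R]_M => p1_netf g x (W, thb)) (xs i)))
  (fun i => p1_vnorm (xs i) ^+ 2 * p1_frob (Jg g W thb (xs i)) ^+ 2)
  (fun i => p1_vnorm (xs i)) (p1_spec_norm W)) => //.
- by move=> i; apply: vnorm_gt0.
- exact: spec_ge0.
- by move=> i; rewrite mulr_ge0 ?sqr_ge0.
- by move=> i; exact: sqrtr_ge0.
- move=> i; rewrite jacE // sqrtrM ?sqr_ge0 // !sqrtr_sqr !ger0_norm ?vnorm_ge0 ?sqrtr_ge0 //.
  rewrite mulrA divfK; last by rewrite gt_eqF // vnorm_gt0.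
  exact: frob_mul.
- exact: (sharp_ge H1 H2 H0 interp).
Qed.
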